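(* If $(L,\alpha_L)$ is an $\alpha$-perfect Hom-Leibniz algebra, then the map $\mathrm{Aut}(L,\alpha_L)\to\{g\in\mathrm{Aut}(\mathfrak{uce}_\alpha(L),\overline{\alpha}):g(\mathrm{Ker}\,U_\alpha)=\mathrm{Ker}\,U_\alpha\}$, $h\mapsto\mathfrak{uce}_\alpha(h)$, is a group isomorphism.
   Context: Hom-Leibniz algebras are multiplicative: $(L,\alpha_L)$ is a $\mathbb{K}$-vector space with bilinear bracket and linear $\alpha_L$ such that $[\alpha_L(x),[y,z]]=[[x,y],\alpha_L(z)]-[[x,z],\alpha_L(y)]$ and $\alpha_L[x,y]=[\alpha_L(x),\alpha_L(y)]$; homomorphisms preserve brackets and commute with structure maps; $\mathrm{Aut}$ denotes the group of bijective homomorphisms. $(L,\alpha_L)$ is $\alpha$-perfect if $L=[\alpha_L(L),\alpha_L(L)]$. For $\alpha$-perfect $(L,\alpha_L)$: $I_L\subseteq\alpha_L(L)\otimes\alpha_L(L)$ is spanned by $-[x_1,x_2]\otimes\alpha_L(x_3)+[x_1,x_3]\otimes\alpha_L(x_2)+\alpha_L(x_1)\otimes[x_2,x_3]$; $\mathfrak{uce}_\alpha(L)=(\alpha_L(L)\otimes\alpha_L(L))/I_L$ with classes $\{\alpha_L(x_1),\alpha_L(x_2)\}$, bracket $[\{a,b\},\{c,e\}]=\{[a,b],[c,e]\}$, endomorphism $\overline{\alpha}\{\alpha_L(x_1),\alpha_L(x_2)\}=\{\alpha_L^2(x_1),\alpha_L^2(x_2)\}$, and $U_\alpha:\mathfrak{uce}_\alpha(L)\to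 L$, $U_\alpha\{a,b\}=[a,b]$. For $h\in\mathrm{Aut}(L,\alpha_L)$, $\mathfrak{uce}_\alpha(h)\{\alpha_L(x_1),\alpha_L(x_2)\}=\{\alpha_L(h(x_1)),\alpha_L(h(x_2))\}$. *)

(* Defs.v *)
(* Hom-Leibniz algebras over a field K, and the
   alpha-universal central extension uce_alpha(L) = (alpha(L) (x) alpha(L)) / I_L,
   built as the textbook quotient of the free vector space on alpha(L) x alpha(L)
   by the bilinearity relations and the generators of I_L. *)
From HB Require Import structures.
From mathcomp Require Import all_boot all_order all_algebra.
From Stdlib Require Import ClassicalEpsilon.
Set Implicit Arguments. Unset Strict Implicit. Unset Printing Implicit Defensive.
Import Order.TTheory GRing.Theory Num.Theory.
Local Open Scope ring_scope.

Section HomLeibniz.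
Variables (K : fieldType) (L : lmodType K) (br : L -> L -> L) (al : L -> L).

Definition lin (f : L -> L) : Prop :=
  forall (a : K) (u v : L), f (a *: u + v) = a *: f u + f v.

Definition hom_leibniz : Prop :=
  [/\ (forall x, lin (br x)), (forall y, lin (fun x => br x y)), lin al,
      (forall x y z, br (al x) (br y z) = br (br x y) (al z) - br (br x z) (al y))
    & (forall x y, al (br x y) = br (al x) (al y))].

Definition alpha_perfect : Prop :=
  forall z : L, exists s : seq (K * (L * L)),
    z = \sum_(t <- s) t.1 *: br (al t.2.1) (al t.2.2).

Definition hom_L (h : L -> L) : Prop :=
  [/\ lin h, (forall x y, h (br x y) = br (h x) (h y)) & (forall x, h (al x) = al (h x))].
Definition aut_L (h : L -> L) : Prop := hom_L h /\ bijective h.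

(* Formal sums: a term (c, (x, y)) stands for c . (alpha x (x) alpha y),
   so formal sums range exactly over the free space on alpha(L) x alpha(L). *)
Definition FS := seq (K * (L * L)).

Definition coef (s : FS) (p : L * L) : K :=
  \sum_(t <- s | (al t.2.1, al t.2.2) == p) t.1.

Definition scale_fs (k : K) (s : FS) : FS := [seq (k * t.1, t.2) | t <- s].

(* generators of the relations: bilinearity in each slot, and the generators
   -[x1,x2] (x) alpha x3 + [x1,x3] (x) alpha x2 + alpha x1 (x) [x2,x3] of I_L
   (with [x1,x2] = alpha w1 etc., i.e. the generators lying in
   alpha(L) (x) alpha(L)). *)
Definition rel_gen (g : FS) : Prop :=
  (exists (c : K) (x x' y : L),
      g = [:: (1, (c *: x + x', y)); (- c, (x, y)); (-1, (x', y))]) \/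
  (exists (c : K) (x y y' : L),
      g = [:: (1, (x, c *: y + y')); (- c, (x, y)); (-1, (x, y'))]) \/
  (exists x1 x2 x3 w1 w2 w3 : L,
      [/\ al w1 = br x1 x2, al w2 = br x1 x3, al w3 = br x2 x3 &
      g = [:: (-1, (w1, x3)); (1, (w2, x2)); (1, (x1, w3))]]).

Definition in_rel (s : FS) : Prop :=
  exists gs : seq (K * FS), List.Forall (fun u => rel_gen u.2) gs /\
    coef s = coef (flatten [seq scale_fs u.1 u.2 | u <- gs]).

Definition fs_equiv (s t : FS) : Prop := in_rel (s ++ scale_fs (-1) t).

Definition uce := {P : FS -> Prop | exists s : FS, P = fs_equiv s}.

Definition ucls (s : FS) : uce :=
  exist (fun P => exists s0 : FS, P = fs_equiv s0) (fs_equiv s) (ex_intro _ s erefl).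

Definition urepr (c : uce) : FS :=
  proj1_sig (constructive_indefinite_description _ (proj2_sig c)).

(* {alpha x1, alpha x2} *)
Definition ugen (x1 x2 : L) : uce := ucls [:: (1, (x1, x2))].

Definition uadd (c d : uce) : uce := ucls (urepr c ++ urepr d).
Definition uscale (k : K) (c : uce) : uce := ucls (scale_fs k (urepr c)).
Definition uzero : uce := ucls [::].

(* bracket [{a,b},{c,e}] = {[a,b],[c,e]}, extended bilinearly
   ({alpha x1,alpha x2} |-> [alpha x1, alpha x2] = alpha [x1,x2]) *)
Definition ubr (c d : uce) : uce :=
  ucls [seq (t.1 * u.1, (br t.2.1 t.2.2, br u.2.1 u.2.2)) | t <- urepr c, u <- urepr d].

(* alpha-bar {alpha x1, alpha x2} = {alpha^2 x1, alpha^2 x2} *)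
Definition ualpha (c : uce) : uce :=
  ucls [seq (t.1, (al t.2.1, al t.2.2)) | t <- urepr c].

Definition Ualpha (c : uce) : L :=
  \sum_(t <- urepr c) t.1 *: br (al t.2.1) (al t.2.2).

(* uce_alpha(h) {alpha x1, alpha x2} = {alpha (h x1), alpha (h x2)} *)
Definition uce_map (h : L -> L) (c : uce) : uce :=
  ucls [seq (t.1, (h t.2.1, h t.2.2)) | t <- urepr c].

Definition aut_uce (g : uce -> uce) : Prop :=
  [/\ (forall (a : K) (u v : uce), g (uadd (uscale a u) v) = uadd (uscale a (g u)) (g v)),
      (forall c d, g (ubr c d) = ubr (g c) (g d)),
      (forall c, g (ualpha c) = ualpha (g c))
    & bijective g].

Definition preserves_ker (g : uce -> uce) : Prop :=
  forall d : uce, Ualpha d = 0 <-> exists c : uce, Ualpha c = 0 /\ g c = d.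

End HomLeibniz.

Arguments hom_leibniz {K L} br al.
Arguments alpha_perfect {K L} br al.
Arguments hom_L {K L} br al h.
Arguments aut_L {K L} br al h.
Arguments uce_map {K L} br al h c.
Arguments aut_uce {K L br al} g.
Arguments preserves_ker {K L br al} g.

(* Main.v *)
Require Import Defs.
From HB Require Import structures.
From mathcomp Require Import all_boot all_order all_algebra.
From mathcomp Require Import ring.
From Stdlib Require Import FunctionalExtensionality PropExtensionality ProofIrrelevance ClassicalEpsilon.
Set Implicit Arguments. Unset Strict Implicit. Unset Printing Implicit Defensive.
Import GRing.Theory.
Local Open Scope ring_scope.

Section Dev.
Variables (K : fieldType) (L : lmodType K) (br : L -> L -> L) (al : L -> L).
Hypothesis HL : hom_leibniz br al.

Local Notation FS := (FS (K:=K) L).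
Local Notation coef := (coef al).
Local Notation pi t := (al t.2.1, al t.2.2).

Lemma coef_nil p : coef [::] p = 0.
Proof. by rewrite /Defs.coef big_nil. Qed.

Lemma coef_cons t s p : coef (t :: s) p = (if pi t == p then t.1 else 0) + coef s p.
Proof. by rewrite /Defs.coef big_cons; case: ifP => _; rewrite ?add0r. Qed.

Lemma coef_cat s t p : coef (s ++ t) p = coef s p + coef t p.
Proof. by rewrite /Defs.coef big_cat. Qed.

Lemma coef_scale k s p : coef (scale_fs k s) p = k * coef s p.
Proof.
elim: s => [|t s IH]; first by rewrite /= coef_nil mulr0.
rewrite /= !coef_cons IH mulrDr; case: ifP => _; by rewrite ?mulr0.
Qed.

Lemma coef_flat (gs : seq (K * FS)) p :
  coef (flatten [seq scale_fs u.1 u.2 | u <- gs]) p = \sum_(u <- gs) u.1 * coef u.2 p.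
Proof.
elim: gs => [|u gs IH]; first by rewrite /= coef_nil big_nil.
by rewrite /= coef_cat IH coef_scale big_cons.
Qed.

Definition W (f : L * L -> K) := exists gs : seq (K * FS),
  List.Forall (fun u => rel_gen br al u.2) gs /\
  f = coef (flatten [seq scale_fs u.1 u.2 | u <- gs]).

Lemma W_ext f g : W f -> f =1 g -> W g.
Proof. by move=> Wf /functional_extensionality <-. Qed.

Lemma W0 : W (fun _ => 0).
Proof. exists [::]; split => //; apply: functional_extensionality => p; by rewrite coef_nil. Qed.

Lemma WD f g : W f -> W g -> W (fun p => f p + g p).
Proof.
move=> [gs [F1 ->]] [hs [F2 ->]]; exists (gs ++ hs); split.
  by apply/List.Forall_app.
apply: functional_extensionality => p; by rewrite map_cat flatten_cat coef_cat.
Qed.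

Lemma WZ k f : W f -> W (fun p => k * f p).
Proof.
move=> [gs [F1 ->]]; exists [seq (k * u.1, u.2) | u <- gs]; split.
  elim: gs F1 => [|u gs IH] /= F1; first by [].
  by inversion F1; constructor => //; apply: IH.
apply: functional_extensionality => p; rewrite !coef_flat big_map mulr_sumr.
by apply: eq_bigr => u _; rewrite mulrA.
Qed.

Lemma Wgen g : rel_gen br al g -> W (coef g).
Proof.
move=> Hg; exists [:: (1, g)]; split; first by constructor.
apply: functional_extensionality => p; by rewrite coef_flat big_seq1 mul1r.
Qed.

Definition eqv (s t : FS) := W (fun p => coef s p - coef t p).

Lemma eqv_coef s t : coef s =1 coef t -> eqv s t.
Proof. move=> E; apply: W_ext W0 _ => p; by rewrite E subrr. Qed.

Lemma eqv_refl s : eqv s s.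
Proof. exact: eqv_coef. Qed.

Lemma eqv_sym s t : eqv s t -> eqv t s.
Proof. move=> /(WZ (-1)) H; apply: W_ext H _ => p; ring. Qed.

Lemma eqv_trans s t u : eqv s t -> eqv t u -> eqv s u.
Proof. move=> H1 H2; apply: W_ext (WD H1 H2) _ => p; ring. Qed.

Lemma eqv_cat s s' t t' : eqv s s' -> eqv t t' -> eqv (s ++ t) (s' ++ t').
Proof. move=> H1 H2; apply: W_ext (WD H1 H2) _ => p; rewrite !coef_cat; ring. Qed.

Lemma eqv_scale k s t : eqv s t -> eqv (scale_fs k s) (scale_fs k t).
Proof. move=> /(WZ k) H; apply: W_ext H _ => p; rewrite !coef_scale; ring. Qed.

Lemma eqv_gen g : rel_gen br al g -> eqv g [::].
Proof. move=> /Wgen H; apply: W_ext H _ => p; by rewrite coef_nil subr0. Qed.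

Lemma fs_equivE s t : fs_equiv br al s t <-> eqv s t.
Proof.
rewrite /fs_equiv /in_rel -/(W _); split => H; apply: W_ext H _ => p;
by rewrite coef_cat coef_scale mulN1r.
Qed.


Local Notation U := (uce br al).
Local Notation ucls := (ucls br al).

Lemma ucls_eq s t : eqv s t -> ucls s = ucls t.
Proof.
move=> E.
have Hf : fs_equiv br al s = fs_equiv br al t.
  apply: functional_extensionality => u; apply: propositional_extensionality.
  rewrite !fs_equivE; split => H; [exact: eqv_trans (eqv_sym E) H | exact: eqv_trans E H].
rewrite /Defs.ucls; move: (ex_intro _ s _) (ex_intro _ t _); rewrite Hf => p q.
by rewrite (proof_irrelevance _ p q).
Qed.

Lemma ucls_eqv s t : ucls s = ucls t -> eqv s t.
Proof.
move=> /(congr1 (@proj1_sig _ _)) /= E.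
have : fs_equiv br al t t by apply/fs_equivE; exact: eqv_refl.
by rewrite -E => /fs_equivE.
Qed.

Lemma ucls_repr (c : U) : ucls (urepr c) = c.
Proof.
rewrite /urepr; case: (constructive_indefinite_description _ _) => s /= E.
case: c E => P pf /= E; subst P; rewrite /Defs.ucls; congr exist; exact: proof_irrelevance.
Qed.

Lemma repr_eqv s : eqv (urepr (ucls s)) s.
Proof. apply: ucls_eqv; exact: ucls_repr. Qed.

Lemma cls_surj (c : U) : exists s, c = ucls s.
Proof. by exists (urepr c); rewrite ucls_repr. Qed.

Lemma uadd_cls s t : uadd (ucls s) (ucls t) = ucls (s ++ t).
Proof. apply: ucls_eq; apply: eqv_cat; exact: repr_eqv. Qed.

Lemma uscale_cls k s : uscale k (ucls s) = ucls (scale_fs k s).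
Proof. apply: ucls_eq; apply: eqv_scale; exact: repr_eqv. Qed.


Ltac coefs := move=> ?; rewrite ?coef_cons ?coef_nil /=; repeat case: ifP => _; ring.

Lemma zero1 y : eqv [:: (1, (0, y))] [::].
Proof.
have G : rel_gen br al [:: (1, (1 *: 0 + 0, y)); (- 1, (0, y)); (-1, (0, y))].
  by left; exists 1, 0, 0, y.
apply: W_ext (WZ (-1) (Wgen G)) _; rewrite scale1r addr0; coefs.
Qed.

Lemma zero2 x : eqv [:: (1, (x, 0))] [::].
Proof.
have G : rel_gen br al [:: (1, (x, 1 *: 0 + 0)); (- 1, (x, 0)); (-1, (x, 0))].
  by right; left; exists 1, x, 0, 0.
apply: W_ext (WZ (-1) (Wgen G)) _; rewrite scale1r addr0; coefs.
Qed.

Lemma coll1 (s : seq (K * L)) y :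
  eqv [seq (u.1, (u.2, y)) | u <- s] [:: (1, (\sum_(u <- s) u.1 *: u.2, y))].
Proof.
elim: s => [|[k x] s IH]; first by rewrite big_nil; apply: eqv_sym; apply: zero1.
rewrite big_cons /=.
apply: eqv_trans (eqv_cat (eqv_refl [:: (k, (x, y))]) IH) _.
have G : rel_gen br al [:: (1, (k *: x + \sum_(u <- s) u.1 *: u.2, y)); (- k, (x, y));
   (-1, (\sum_(u <- s) u.1 *: u.2, y))].
  by left; eexists; eexists; eexists; eexists.
apply: W_ext (WZ (-1) (Wgen G)) _; coefs.
Qed.

Lemma coll2 (s : seq (K * L)) x :
  eqv [seq (u.1, (x, u.2)) | u <- s] [:: (1, (x, \sum_(u <- s) u.1 *: u.2))].
Proof.
elim: s => [|[k y] s IH]; first by rewrite big_nil; apply: eqv_sym; apply: zero2.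
rewrite big_cons /=.
apply: eqv_trans (eqv_cat (eqv_refl [:: (k, (x, y))]) IH) _.
have G : rel_gen br al [:: (1, (x, k *: y + \sum_(u <- s) u.1 *: u.2)); (- k, (x, y));
   (-1, (x, \sum_(u <- s) u.1 *: u.2))].
  by right; left; eexists; eexists; eexists; eexists.
apply: W_ext (WZ (-1) (Wgen G)) _; coefs.
Qed.

Lemma eqv_al x y x' y' : al x = al x' -> al y = al y' -> eqv [:: (1, (x, y))] [:: (1, (x', y'))].
Proof. move=> E1 E2; apply: eqv_coef => p; by rewrite !coef_cons E1 E2. Qed.

Lemma mvscale k x y : eqv [:: (1, (x, k *: y))] [:: (1, (k *: x, y))].
Proof.
have H1 := coll1 [:: (k, x)] y; have H2 := coll2 [:: (k, y)] x.
rewrite /= !big_seq1 in H1 H2.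
exact: eqv_trans (eqv_sym H2) H1.
Qed.


Definition brp (s t : FS) : FS :=
  [seq (a.1 * b.1, (br a.2.1 a.2.2, br b.2.1 b.2.2)) | a <- s, b <- t].
Definition Xs (s : FS) : L := \sum_(a <- s) a.1 *: br a.2.1 a.2.2.

Lemma coll_br s t : eqv (brp s t) [:: (1, (Xs s, Xs t))].
Proof.
elim: s => [|a s IH]; first by rewrite /Xs big_nil; apply: eqv_sym; apply: zero1.
rewrite /brp /= -/(brp s t).
have E : [seq (a.1 * b.1, (br a.2.1 a.2.2, br b.2.1 b.2.2)) | b <- t] =
  [seq (u.1, (br a.2.1 a.2.2, u.2)) | u <- [seq (a.1 * b.1, br b.2.1 b.2.2) | b <- t]].
  by rewrite -map_comp.
rewrite E; have H1 := coll2 [seq (a.1 * b.1, br b.2.1 b.2.2) | b <- t] (br a.2.1 a.2.2).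
have ES : \sum_(u <- [seq (a.1 * b.1, br b.2.1 b.2.2) | b <- t]) u.1 *: u.2 = a.1 *: Xs t.
  rewrite big_map /Xs scaler_sumr; apply: eq_bigr => b _; by rewrite scalerA.
rewrite ES in H1.
have H2 := eqv_trans H1 (mvscale _ _ _).
apply: eqv_trans (eqv_cat H2 IH) _.
have H3 := coll1 [:: (1, a.1 *: br a.2.1 a.2.2); (1, Xs s)] (Xs t).
rewrite /= !big_cons big_nil !scale1r addr0 in H3.
by rewrite /Xs big_cons -/(Xs s).
Qed.

Lemma lin0 (f : L -> L) : lin f -> f 0 = 0.
Proof.
move=> Hf; have := Hf 1 0 0; rewrite !scale1r addr0 => E.
apply: (addrI (f 0)); by rewrite addr0 -E.
Qed.

Lemma lin_sum (f : L -> L) (I : Type) (r : seq I) (c : I -> K) (F : I -> L) : lin f ->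
  f (\sum_(i <- r) c i *: F i) = \sum_(i <- r) c i *: f (F i).
Proof.
move=> Hf; elim: r => [|i r IH]; first by rewrite !big_nil lin0.
by rewrite !big_cons Hf IH.
Qed.


Definition evL (G : L * L -> L) (s : FS) := \sum_(t <- s) t.1 *: G (pi t).
Definition evK (G : L * L -> K) (s : FS) := \sum_(t <- s) t.1 * G (pi t).

Lemma evL_U G s (r : seq (L * L)) : uniq r -> {subset [seq pi t | t <- s] <= r} ->
  evL G s = \sum_(q <- r) coef s q *: G q.
Proof.
move=> Ur; elim: s => [|t s IH] Hs.
  by rewrite /evL big_nil big1 // => q _; rewrite coef_nil scale0r.
rewrite /evL big_cons -/(evL G s) IH; last by move=> q Hq; apply: Hs; rewrite /= in_cons Hq orbT.
have -> : \sum_(q <- r) coef (t :: s) q *: G q = \sum_(q <- r)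
   ((if pi t == q then t.1 else 0) *: G q + coef s q *: G q).
  by apply: eq_bigr => q _; rewrite coef_cons scalerDl.
rewrite big_split /=; congr (_ + _).
have Ht : pi t \in r by apply: Hs; rewrite /= in_cons eqxx.
rewrite (bigD1_seq (pi t)) //= eqxx big1 ?addr0 // => q Hq.
by rewrite eq_sym (negbTE Hq) scale0r.
Qed.

Lemma evK_U G s (r : seq (L * L)) : uniq r -> {subset [seq pi t | t <- s] <= r} ->
  evK G s = \sum_(q <- r) coef s q * G q.
Proof.
move=> Ur; elim: s => [|t s IH] Hs.
  by rewrite /evK big_nil big1 // => q _; rewrite coef_nil mul0r.
rewrite /evK big_cons -/(evK G s) IH; last by move=> q Hq; apply: Hs; rewrite /= in_cons Hq orbT.
have -> : \sum_(q <- r) coef (t :: s) q * G q = \sum_(q <- r)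
   ((if pi t == q then t.1 else 0) * G q + coef s q * G q).
  by apply: eq_bigr => q _; rewrite coef_cons mulrDl.
rewrite big_split /=; congr (_ + _).
have Ht : pi t \in r by apply: Hs; rewrite /= in_cons eqxx.
rewrite (bigD1_seq (pi t)) //= eqxx big1 ?addr0 // => q Hq.
by rewrite eq_sym (negbTE Hq) mul0r.
Qed.

Lemma evL_coef G s s' : coef s =1 coef s' -> evL G s = evL G s'.
Proof.
move=> E; set r := undup [seq pi t | t <- s ++ s'].
have Ur : uniq r by apply: undup_uniq.
have S1 : {subset [seq pi t | t <- s] <= r}.
  by move=> q Hq; rewrite mem_undup map_cat mem_cat Hq.
have S2 : {subset [seq pi t | t <- s'] <= r}.
  by move=> q Hq; rewrite mem_undup map_cat mem_cat Hq orbT.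
rewrite (evL_U G Ur S1) (evL_U G Ur S2).
by apply: eq_bigr => q _; rewrite E.
Qed.

Lemma evK_coef G s s' : coef s =1 coef s' -> evK G s = evK G s'.
Proof.
move=> E; set r := undup [seq pi t | t <- s ++ s'].
have Ur : uniq r by apply: undup_uniq.
have S1 : {subset [seq pi t | t <- s] <= r}.
  by move=> q Hq; rewrite mem_undup map_cat mem_cat Hq.
have S2 : {subset [seq pi t | t <- s'] <= r}.
  by move=> q Hq; rewrite mem_undup map_cat mem_cat Hq orbT.
rewrite (evK_U G Ur S1) (evK_U G Ur S2).
by apply: eq_bigr => q _; rewrite E.
Qed.


Definition Ev (s : FS) : L := \sum_(t <- s) t.1 *: br (al t.2.1) (al t.2.2).

Lemma Ev_cat s t : Ev (s ++ t) = Ev s + Ev t.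
Proof. by rewrite /Ev big_cat. Qed.

Lemma Ev_scale k s : Ev (scale_fs k s) = k *: Ev s.
Proof. rewrite /Ev big_map scaler_sumr; apply: eq_bigr => t _; by rewrite scalerA. Qed.

Lemma Ev_flat (gs : seq (K * FS)) :
  Ev (flatten [seq scale_fs u.1 u.2 | u <- gs]) = \sum_(u <- gs) u.1 *: Ev u.2.
Proof.
elim: gs => [|u gs IH]; first by rewrite /Ev !big_nil.
by rewrite /= Ev_cat IH Ev_scale big_cons.
Qed.

Lemma Ev_gen g : rel_gen br al g -> Ev g = 0.
Proof.
case: HL => Hbl Hbr Hal Hlb Hmul.
case=> [[c [x [x' [y ->]]]]|[[c [x [y [y' ->]]]]|[x1 [x2 [x3 [w1 [w2 [w3 [E1 E2 E3 ->]]]]]]]]];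
  rewrite /Ev !big_cons big_nil /= addr0 ?scale1r ?scaleN1r ?scaleNr.
- rewrite Hal Hbr.
  by rewrite addrACA !subrr addr0.
- rewrite Hal Hbl.
  by rewrite addrACA !subrr addr0.
- rewrite E1 E2 E3 Hlb.
  by rewrite [X in _ + X]addrC subrK addNr.
Qed.

Lemma Ev_W s : W (coef s) -> Ev s = 0.
Proof.
move=> [gs [F E]].
have -> : Ev s = Ev (flatten [seq scale_fs u.1 u.2 | u <- gs]).
  exact: (evL_coef (fun q => br q.1 q.2)) (fun p => congr1 (fun f => f p) E).
rewrite Ev_flat; elim: gs F {E} => [|u gs IH] F; first by rewrite big_nil.
inversion F; subst; by rewrite big_cons IH // Ev_gen // scaler0 add0r.
Qed.

Lemma eqvE s t : eqv s t <-> W (coef (s ++ scale_fs (-1) t)).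
Proof. by rewrite -fs_equivE. Qed.

Lemma Ev_eqv s t : eqv s t -> Ev s = Ev t.
Proof.
move=> /eqvE /Ev_W; rewrite Ev_cat Ev_scale scaleN1r => /eqP.
by rewrite subr_eq0 => /eqP.
Qed.


Definition mapF (f : L -> L) (s : FS) : FS := [seq (t.1, (f t.2.1, f t.2.2)) | t <- s].

Section Map.
Variable f : L -> L.
Hypothesis Hf : hom_L br al f.

Lemma coef_mapF s p : coef (mapF f s) p = evK (fun q => ((f q.1, f q.2) == p)%:R) s.
Proof.
case: Hf => _ _ Hfa.
rewrite /Defs.coef /evK big_map big_mkcond; apply: eq_bigr => t _ /=.
by rewrite !Hfa; case: ifP => _; rewrite ?mulr1 ?mulr0.
Qed.

Lemma mapF_coef s s' : coef s =1 coef s' -> coef (mapF f s) =1 coef (mapF f s').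
Proof. move=> E p; rewrite !coef_mapF; exact: evK_coef. Qed.

Lemma mapF_gen g : rel_gen br al g -> rel_gen br al (mapF f g).
Proof.
case: Hf => Hfl Hfb Hfa.
case=> [[c [x [x' [y ->]]]]|[[c [x [y [y' ->]]]]|[x1 [x2 [x3 [w1 [w2 [w3 [E1 E2 E3 ->]]]]]]]]];
  rewrite /mapF /=.
- by left; exists c, (f x), (f x'), (f y); rewrite Hfl.
- by right; left; exists c, (f x), (f y), (f y'); rewrite Hfl.
- right; right; exists (f x1), (f x2), (f x3), (f w1), (f w2), (f w3).
  by rewrite -!Hfa E1 E2 E3 !Hfb.
Qed.

Lemma mapF_cat s t : mapF f (s ++ t) = mapF f s ++ mapF f t.
Proof. exact: map_cat. Qed.

Lemma mapF_scale k s : mapF f (scale_fs k s) = scale_fs k (mapF f s).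
Proof. by rewrite /mapF /scale_fs -!map_comp. Qed.

Lemma mapF_flat (gs : seq (K * FS)) :
  mapF f (flatten [seq scale_fs u.1 u.2 | u <- gs]) =
  flatten [seq scale_fs u.1 u.2 | u <- [seq (u.1, mapF f u.2) | u <- gs]].
Proof. elim: gs => [|u gs IH] //=; by rewrite mapF_cat IH mapF_scale. Qed.

Lemma mapF_eqv s t : eqv s t -> eqv (mapF f s) (mapF f t).
Proof.
move=> /eqvE [gs [F E]]; apply/eqvE.
exists [seq (u.1, mapF f u.2) | u <- gs]; split.
  elim: gs F {E} => [|u gs IH] F //=; inversion F; subst; constructor => //.
  exact: mapF_gen. exact: IH.
rewrite -mapF_flat -mapF_scale -mapF_cat.
apply: functional_extensionality; apply: mapF_coef => p; by rewrite E.
Qed.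

Lemma Ev_mapF s : Ev (mapF f s) = f (Ev s).
Proof.
case: Hf => Hfl Hfb Hfa.
rewrite /Ev lin_sum // big_map; apply: eq_bigr => t _ /=; by rewrite Hfb !Hfa.
Qed.

Lemma mapF_brp s t : mapF f (brp s t) = brp (mapF f s) (mapF f t).
Proof.
case: Hf => Hfl Hfb Hfa.
elim: s => [|a s IH] //=; rewrite /brp /= -/(brp s t) -/(brp (mapF f s) (mapF f t)).
rewrite mapF_cat IH /mapF -!map_comp; congr (_ ++ _); apply: eq_map => b /=; by rewrite !Hfb.
Qed.

End Map.

Lemma mapF_comp f g s : mapF f (mapF g s) = mapF (f \o g) s.
Proof. by rewrite /mapF -map_comp. Qed.

Lemma mapF_id s : mapF id s = s.
Proof. rewrite /mapF; elim: s => [|[k [x y]] s IH] //=; by rewrite IH. Qed.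

Lemma alXs s : al (Xs s) = Ev s.
Proof.
case: HL => _ _ Hal _ Hmul.
rewrite /Xs lin_sum //; apply: eq_bigr => t _; by rewrite Hmul.
Qed.

Lemma umap_cls f s : hom_L br al f -> uce_map br al f (ucls s) = ucls (mapF f s).
Proof. move=> Hf; apply: ucls_eq; apply: mapF_eqv => //; exact: repr_eqv. Qed.

Lemma U_cls s : Ualpha (ucls s) = Ev s.
Proof. exact: Ev_eqv (repr_eqv s). Qed.

Lemma ubr_cls s t : ubr (ucls s) (ucls t) = ucls [:: (1, (Xs s, Xs t))].
Proof.
apply: ucls_eq; apply: eqv_trans (coll_br _ _) _.
by apply: eqv_al; rewrite !alXs; apply: Ev_eqv; apply: repr_eqv.
Qed.

Lemma ubr_cls2 s t : ubr (ucls s) (ucls t) = ucls (brp s t).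
Proof. rewrite ubr_cls; apply: ucls_eq; apply: eqv_sym; exact: coll_br. Qed.

Lemma U_ubr (c d : U) : Ualpha (ubr c d) = br (Ualpha c) (Ualpha d).
Proof.
case: (cls_surj c) => s ->; case: (cls_surj d) => t ->.
by rewrite ubr_cls !U_cls /Ev big_seq1 scale1r /= !alXs.
Qed.

Lemma ubr_U (c c' d d' : U) : Ualpha c = Ualpha c' -> Ualpha d = Ualpha d' ->
  ubr c d = ubr c' d'.
Proof.
case: (cls_surj c) => s ->; case: (cls_surj d) => t ->.
case: (cls_surj c') => s' ->; case: (cls_surj d') => t' ->.
rewrite !U_cls !ubr_cls => E1 E2; apply: ucls_eq; apply: eqv_al; by rewrite !alXs.
Qed.


Lemma hom_al : hom_L br al al.
Proof. by case: HL => _ _ Hal _ Hmul; split. Qed.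

Lemma hom_comp f g : hom_L br al f -> hom_L br al g -> hom_L br al (f \o g).
Proof.
move=> [Hf1 Hf2 Hf3] [Hg1 Hg2 Hg3]; split => /=.
- by move=> a u v /=; rewrite Hg1 Hf1.
- by move=> x y /=; rewrite Hg2 Hf2.
- by move=> x /=; rewrite Hg3 Hf3.
Qed.

Lemma aut_inv h : aut_L br al h -> exists hi, [/\ aut_L br al hi, cancel h hi & cancel hi h].
Proof.
move=> [[H1 H2 H3] [hi c1 c2]]; exists hi; split => //; split; last by exists h.
split.
- move=> a u v; apply: (can_inj c1); by rewrite H1 !c2.
- move=> x y; apply: (can_inj c1); by rewrite H2 !c2.
- move=> x; apply: (can_inj c1); by rewrite H3 !c2.
Qed.

Lemma U_map f (c : U) : hom_L br al f -> Ualpha (uce_map br al f c) = f (Ualpha c).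
Proof. move=> Hf; case: (cls_surj c) => s ->; by rewrite umap_cls // !U_cls Ev_mapF. Qed.

Lemma U_lin a (u v : U) : Ualpha (uadd (uscale a u) v) = a *: Ualpha u + Ualpha v.
Proof.
case: (cls_surj u) => s ->; case: (cls_surj v) => t ->.
by rewrite uscale_cls uadd_cls !U_cls Ev_cat Ev_scale.
Qed.

Lemma U_surj : alpha_perfect br al -> forall z, exists c : U, Ualpha c = z.
Proof. move=> HP z; case: (HP z) => s ->; exists (ucls s); by rewrite U_cls. Qed.

Definition lin_u (G : U -> U) :=
  forall (a : K) (u v : U), G (uadd (uscale a u) v) = uadd (uscale a (G u)) (G v).

Lemma lin_zero G : lin_u G -> G (ucls [::]) = ucls [::].
Proof.
move=> HG.
have E : ucls [::] = uadd (uscale 1 (ucls [::])) (ucls [::]) by rewrite uscale_cls uadd_cls.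
have := HG 1 (ucls [::]) (ucls [::]); rewrite -E.
case: (cls_surj (G (ucls [::]))) => r ->; rewrite uscale_cls uadd_cls => /ucls_eqv H.
apply: ucls_eq; apply: W_ext (WZ (-1) H) _ => p; rewrite coef_cat coef_scale coef_nil.
ring.
Qed.

Lemma lin_u_ext G G' : lin_u G -> lin_u G' -> (forall x y, G (ugen br al x y) = G' (ugen br al x y)) ->
  G =1 G'.
Proof.
move=> HG HG' E c; case: (cls_surj c) => s ->.
elim: s => [|[k [x y]] s IH]; first by rewrite !lin_zero.
have -> : ucls ((k, (x, y)) :: s) = uadd (uscale k (ugen br al x y)) (ucls s).
  by rewrite /ugen uscale_cls uadd_cls /= mulr1.
by rewrite HG HG' E IH.
Qed.

Lemma umap_lin f : hom_L br al f -> lin_u (uce_map br al f).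
Proof.
move=> Hf a u v; case: (cls_surj u) => s ->; case: (cls_surj v) => t ->.
by rewrite uscale_cls uadd_cls !umap_cls // uscale_cls uadd_cls mapF_cat mapF_scale.
Qed.

Lemma umap_br f (c d : U) : hom_L br al f ->
  uce_map br al f (ubr c d) = ubr (uce_map br al f c) (uce_map br al f d).
Proof.
move=> Hf; case: (cls_surj c) => s ->; case: (cls_surj d) => t ->.
by rewrite ubr_cls2 !umap_cls // ubr_cls2 mapF_brp.
Qed.

Lemma umap_comp f g (c : U) : hom_L br al f -> hom_L br al g ->
  uce_map br al (f \o g) c = uce_map br al f (uce_map br al g c).
Proof.
move=> Hf Hg; case: (cls_surj c) => s ->.
by rewrite !umap_cls // ?mapF_comp //; apply: hom_comp.
Qed.

Lemma umap_alpha f (c : U) : hom_L br al f ->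
  uce_map br al f (ualpha c) = ualpha (uce_map br al f c).
Proof.
move=> Hf; have [_ _ Hfa] := Hf.
change (uce_map br al f (uce_map br al al c) = uce_map br al al (uce_map br al f c)).
rewrite -!umap_comp //; try exact: hom_al.
congr uce_map; apply: functional_extensionality => x /=; exact: Hfa.
Qed.

Lemma umap_id (c : U) : uce_map br al id c = c.
Proof.
case: (cls_surj c) => s ->; rewrite umap_cls ?mapF_id //.
Qed.

Lemma part1 h : aut_L br al h ->
  aut_uce (uce_map br al h) /\ preserves_ker (uce_map br al h).
Proof.
move=> Hh; have [hi [Hhi c1 c2]] := aut_inv Hh.
have Hh' := Hh.1; have Hhi' := Hhi.1.
split; first split.
- exact: umap_lin.
- by move=> c d; apply: umap_br.
- by move=> c; apply: umap_alpha.
- exists (uce_map br al hi) => c; rewrite -umap_comp //.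
  + have -> : hi \o h = id by apply: functional_extensionality => x /=; apply: c1.
    exact: umap_id.
  + have -> : h \o hi = id by apply: functional_extensionality => x /=; apply: c2.
    exact: umap_id.
- move=> d; split.
  + move=> Hd; exists (uce_map br al hi d); split.
      by rewrite U_map // Hd; apply: lin0; case: Hhi'.
    rewrite -umap_comp //.
    have -> : h \o hi = id by apply: functional_extensionality => x /=; apply: c2.
    exact: umap_id.
  + move=> [c [Hc <-]]; rewrite U_map // Hc; apply: lin0; by case: Hh'.
Qed.


Lemma ker_compat G : lin_u G -> (forall d, Ualpha d = 0 -> Ualpha (G d) = 0) ->
  forall c c' : U, Ualpha c = Ualpha c' -> Ualpha (G c) = Ualpha (G c').
Proof.
move=> HG HK c c' E.
have := HK (uadd (uscale (-1) c') c).
rewrite HG !U_lin E !scaleN1r addNr => /(_ erefl) /eqP.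
by rewrite addrC subr_eq0 => /eqP.
Qed.

Section Surj.
Variable g : U -> U.
Hypotheses (Hg : aut_uce g) (Hk : preserves_ker g) (HP : alpha_perfect br al).

Definition rep (z : L) : FS := proj1_sig (constructive_indefinite_description _ (HP z)).
Lemma rep_spec z : Ev (rep z) = z.
Proof. rewrite /rep; case: (constructive_indefinite_description _ _) => s /= ->; by []. Qed.

Definition hh (z : L) : L := Ualpha (g (ucls (rep z))).

Lemma g_lin : lin_u g. Proof. by case: Hg. Qed.

Lemma hhU c : hh (Ualpha c) = Ualpha (g c).
Proof.
apply: (ker_compat g_lin) => [d Hd|]; last by rewrite U_cls rep_spec.
by apply/(Hk (g d)); exists d.
Qed.

Lemma hh_hom : hom_L br al hh.
Proof.
case: Hg => Hl Hb Ha _.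
split.
- move=> a z w; case: (U_surj HP z) => c <-; case: (U_surj HP w) => d <-.
  by rewrite -U_lin !hhU (Hl a c d) U_lin.
- move=> z w; case: (U_surj HP z) => c <-; case: (U_surj HP w) => d <-.
  by rewrite -U_ubr !hhU (Hb c d) U_ubr.
- move=> z; case: (U_surj HP z) => c <-.
  have Ua : forall c0 : U, Ualpha (ualpha c0) = al (Ualpha c0).
    move=> c0; change (Ualpha (uce_map br al al c0) = al (Ualpha c0)).
    apply: U_map; exact: hom_al.
  by rewrite -Ua !hhU (Ha c) Ua.
Qed.

Lemma hh_bij : bijective hh.
Proof.
case: Hg => Hl _ _ [gi c1 c2].
have gil : lin_u gi.
  move=> a u v; apply: (can_inj c1); by rewrite (Hl a (gi u) (gi v)) !c2.
have giU : forall c c' : U, Ualpha c = Ualpha c' -> Ualpha (gi c) = Ualpha (gi c').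
  apply: (ker_compat gil) => d Hd.
  have [e [He Ee]] := (proj1 (Hk d) Hd).
  by rewrite -Ee c1.
exists (fun z => Ualpha (gi (ucls (rep z)))).
- move=> z; case: (U_surj HP z) => c <-; rewrite hhU.
  by rewrite (giU _ (g c)) ?c1 // U_cls rep_spec.
- move=> z; case: (U_surj HP z) => c <-.
  have E : Ualpha (gi (ucls (rep (Ualpha c)))) = Ualpha (gi c).
    by apply: giU; rewrite U_cls rep_spec.
  by rewrite E hhU c2.
Qed.

Lemma Xs_mapF s : Xs (mapF al s) = Ev s.
Proof. by rewrite /Xs /Ev big_map. Qed.

Lemma hh_ext : uce_map br al hh = g.
Proof.
apply: functional_extensionality; apply: lin_u_ext.
- exact: umap_lin hh_hom.
- exact: g_lin.
move=> x y.
have -> : ugen br al x y = ubr (ucls (mapF al (rep x))) (ucls (mapF al (rep y))).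
  by rewrite ubr_cls !Xs_mapF !rep_spec.
case: Hg => _ Hb _ _.
rewrite umap_br ?Hb; last exact: hh_hom.
by apply: ubr_U; rewrite U_map ?hhU //; exact: hh_hom.
Qed.

End Surj.

End Dev.

Theorem corollary4p4 (K : fieldType) (L : lmodType K)
    (br : L -> L -> L) (al : L -> L) :
  hom_leibniz br al -> alpha_perfect br al ->
  [/\ (* h |-> uce(h) maps Aut(L) into the stabiliser of Ker U_alpha *)
      (forall h, aut_L br al h ->
         aut_uce (uce_map br al h) /\ preserves_ker (uce_map br al h)),
      (* it is a group homomorphism *)
      (forall h k, aut_L br al h -> aut_L br al k ->
         uce_map br al (h \o k) = uce_map br al h \o uce_map br al k),
      (* injective *)
      (forall h k, aut_L br al h -> aut_L br al k ->
         uce_map br al h = uce_map br al k -> h = k)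
    & (* surjective onto the stabiliser *)
      (forall g, aut_uce g -> preserves_ker g ->
         exists h, aut_L br al h /\ uce_map br al h = g)].
Proof.
move=> HL HP; split.
- exact: part1.
- move=> h k Hh Hk; apply: functional_extensionality => c /=.
  exact: umap_comp Hh.1 Hk.1.
- move=> h k Hh Hk E; apply: functional_extensionality => z.
  case: (U_surj HL HP z) => c <-.
  by rewrite -(U_map HL c Hh.1) -(U_map HL c Hk.1) E.
- move=> g Hg Hk; exists (hh g HP); split.
    split; [exact (hh_hom HL Hg Hk HP) | exact (hh_bij HL Hg Hk HP)].
  exact (hh_ext HL Hg Hk HP).
Qed.
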